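(* Let $G$ be an instance, $b>1$ and $R\ge 0$. If $H$ is a minimal motivating subgraph of $G$ for reward $R$, then the edge set of $H$ forms a single directed path from $s$ to $t$.
   Context: An instance is a finite directed acyclic graph $G=(V,E)$ with nonnegative edge costs $c(u,v)$, start node $s$ and target node $t$, where $t$ has no outgoing edges. For a subgraph $H$ of $G$ (obtained by deleting edges), the sophisticated agent with bias $b$ and reward $R$ at $t$ behaves in $H$ as follows: process nodes in reverse topological order; $t$ is never abandoned and $C_R(t)=0$; for $u\ne t$, among out-edges $(u,v)$ of $H$ with $v$ not abandoned let $P(u,v)=b\,c(u,v)+C_R(v)$; if none exists or all have $P(u,v)>R$, $u$ is abandoned; otherwise the agent at $u$ moves to $v^*(u)\in\arg\min P(u,v)$ and $C_R(u)=c(u,v^*(u))+C_R(v^*(u))$. The agent is motivated to traverse $H$ if $s$ is not abandoned in $H$. A minimal motivating subgraph for reward $R$ is a subgraph $H$ of $G$ that the agent is motivated to traverse for reward $R$, while it is not motivated to traverse any proper subgraph of $H$ for reward $R$. *)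

(* Defs.v *)
From HB Require Import structures.
From mathcomp Require Import all_boot all_order all_algebra.
Set Implicit Arguments. Unset Strict Implicit. Unset Printing Implicit Defensive.
Import Order.TTheory GRing.Theory Num.Theory.
Local Open Scope ring_scope.

Section Agent.
Variables (R : realFieldType) (V : finType).

Definition edge_rel (E : {set V * V}) : rel V := fun u v => (u, v) \in E.

Definition is_instance (E : {set V * V}) (c : V -> V -> R) (s t : V) : Prop :=
  (forall u v, (u, v) \in E -> ~~ connect (edge_rel E) v u) /\
  (forall u v, (u, v) \in E -> 0 <= c u v) /\
  (forall v, (t, v) \notin E).

Definition tie_breaker (tb : V -> {set V} -> V) : Prop :=
  forall u (M : {set V}), M != set0 -> tb u M \in M.

(* The behaviour of the sophisticated agent with bias b, reward Rw and
   tie-breaking rule tb in subgraph H: A is the set of abandoned nodes,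
   C u = C_R(u), nxt u = v*(u).  This records exactly the defining equations
   of the reverse-topological-order processing. *)
Definition agent_run (c : V -> V -> R) (t : V) (b Rw : R)
    (tb : V -> {set V} -> V) (H : {set V * V})
    (A : {set V}) (C : V -> R) (nxt : V -> V) : Prop :=
  t \notin A /\ C t = 0 /\
  forall u, u != t ->
    let S := [set v | ((u, v) \in H) && (v \notin A)] in
    let P := fun v => b * c u v + C v in
    let M := [set v in S | [forall w in S, P v <= P w]] in
    ((u \in A) = (S == set0) || [forall v in S, Rw < P v]) /\
    (u \notin A -> nxt u = tb u M /\ C u = c u (nxt u) + C (nxt u)).

Definition motivated (c : V -> V -> R) (s t : V) (b Rw : R)
    (tb : V -> {set V} -> V) (H : {set V * V}) : Prop :=
  exists A C nxt, agent_run c t b Rw tb H A C nxt /\ s \notin A.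

Definition minimal_motivating (E : {set V * V}) (c : V -> V -> R) (s t : V)
    (b Rw : R) (tb : V -> {set V} -> V) (H : {set V * V}) : Prop :=
  H \subset E /\ motivated c s t b Rw tb H /\
  forall H' : {set V * V}, H' \proper H -> ~ motivated c s t b Rw tb H'.

Definition is_st_path (s t : V) (H : {set V * V}) : Prop :=
  exists p : seq V, uniq (s :: p) /\ last s p = t /\
    H = [set e | e \in zip (s :: p) p].

End Agent.

(* Main.v *)
Require Import Defs.
From HB Require Import structures.
From mathcomp Require Import all_boot all_order all_algebra.
Import Order.TTheory GRing.Theory Num.Theory.
Local Open Scope ring_scope.

Lemma exmin (R : realFieldType) (V : finType) (S : {set V}) (f : V -> R) :
  S != set0 -> exists2 v, v \in S & forall w, w \in S -> f v <= f w.
Proof.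
case/set0Pn=> v0 Hv0.
case: (@Order.TotalTheory.arg_minP _ _ _ v0 (mem S) f Hv0) => v Hv Hm.
by exists v.
Qed.

Lemma zipP1 (V : eqType) (nx : V -> V) (t : V) x p :
  path (fun a b => (a != t) && (b == nx a)) x p ->
  forall u v, (u,v) \in zip (x::p) p ->
  [/\ u \in x::p, v \in x::p, u != t & v = nx u].
Proof.
elim: p x => [|y p IH] x //= /andP[/andP[xt /eqP yx] Hp] u v.
rewrite in_cons => /orP[/eqP [-> ->]|Hz].
  by split; rewrite ?in_cons ?eqxx ?orbT ?xt ?yx.
have [K1 K2 K3 K4] := IH y Hp u v Hz.
by split => //; rewrite in_cons; apply/orP; right.
Qed.

Lemma zipP2 (V : eqType) (nx : V -> V) (t : V) x p :
  path (fun a b => (a != t) && (b == nx a)) x p -> last x p = t ->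
  forall u, u \in x::p -> u != t -> (u, nx u) \in zip (x::p) p.
Proof.
elim: p x => [|y p IH] x /=.
  by move=> _ -> u; rewrite in_cons orbF => /eqP ->; rewrite eqxx.
move=> /andP[/andP[xt /eqP yx] Hp] Hl u.
rewrite in_cons => /orP[/eqP ->|Hu] ut; rewrite in_cons.
  by rewrite yx eqxx.
by rewrite (IH y Hp Hl u Hu ut) orbT.
Qed.

Lemma set1n0 (T : finType) (x : T) : [set x] != set0.
Proof. by apply/set0Pn; exists x; rewrite set11. Qed.

Arguments zipP1 {V nx t x p}.
Arguments zipP2 {V nx t x p}.

Lemma path_exists (V : finType) (E : {set V * V}) (A : {set V}) (nx : V -> V)
  (t : V) :
  (forall u v, (u, v) \in E -> ~~ connect (edge_rel E) v u) ->
  (forall u, u \notin A -> u != t -> ((u, nx u) \in E) && (nx u \notin A)) ->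
  forall n u, (#|[set w | connect (edge_rel E) u w]| <= n)%N -> u \notin A ->
  exists p, [/\ path (fun a b => (a != t) && (b == nx a)) u p,
     last u p = t, all (fun x => x \notin A) (u::p),
     uniq (u::p) & all (connect (edge_rel E) u) (u::p)].
Proof.
move=> acyc step; elim=> [|n IH] u.
  rewrite leqn0 => /eqP /cards0_eq /setP /(_ u).
  by rewrite inE connect0 in_set0.
move=> Hc uA.
have [ut|ut] := eqVneq u t.
  by exists [::]; rewrite /= uA ut connect0.
have /andP[Euv vA] := step u uA ut.
set v := nx u in Euv vA *.
have Hsub : [set w | connect (edge_rel E) v w] \proper
            [set w | connect (edge_rel E) u w].
  apply/properP; split.
    apply/subsetP => w; rewrite !inE => Hw.
    by apply: connect_trans Hw; apply: connect1.
  by exists u; rewrite !inE ?connect0 // (negbTE (acyc _ _ Euv)).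
have Hv : (#|[set w | connect (edge_rel E) v w]| <= n)%N.
  by rewrite -ltnS; exact: leq_trans (proper_card Hsub) Hc.
have [p [P1 P2 P3 P4 P5]] := IH v Hv vA.
exists (v :: p); split => //=.
- by rewrite ut eqxx P1.
- by rewrite uA.
- move: P4 => /= ->; rewrite andbT; apply/negP => Hu.
  move/allP: P5 => /(_ u Hu) Hc'.
  by move: (acyc _ _ Euv); rewrite Hc'.
- rewrite connect0 /=; apply/andP; split; first exact: connect1.
  apply/allP => w Hw; apply: connect_trans (connect1 Euv) _.
  by move/allP: P5; apply; rewrite inE Hw orbT.
Qed.

Theorem claim3 (R : realFieldType) (V : finType) (E : {set V * V})
    (c : V -> V -> R) (s t : V) (b Rw : R) (tb : V -> {set V} -> V)
    (H : {set V * V}) :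
  is_instance E c s t -> tie_breaker tb -> 1 < b -> 0 <= Rw ->
  minimal_motivating E c s t b Rw tb H ->
  is_st_path s t H.
Proof.
move=> [acyc [cpos tout]] Htb _ _ [HE [[A [C [nx [[tA [Ct Hrun]] sA]]]] Hmin]].
have step : forall u, u \notin A -> u != t ->
  [/\ (u, nx u) \in H, nx u \notin A,
      b * c u (nx u) + C (nx u) <= Rw & C u = c u (nx u) + C (nx u)].
  move=> u uA ut.
  have [H1 H2] := Hrun u ut.
  move: H1 H2; set S := [set v | _] ; set M := [set v in S | _].
  pose P := fun v => b * c u v + C v.
  move=> H1 H2.
  have [nxe Ce] := H2 uA.
  have : ~~ ((S == set0) || [forall v in S, Rw < P v]) by rewrite -H1.
  rewrite negb_or => /andP[S0 /forallPn [v0]].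
  rewrite negb_imply -leNgt => /andP[v0S Pv0].
  have M0 : M != set0.
    have [v vS vm] := @exmin _ _ S (fun v => b * c u v + C v) S0.
    apply/set0Pn; exists v; rewrite inE vS /=; apply/forall_inP => w wS; exact: vm.
  have := Htb u M M0; rewrite -nxe inE => /andP[nS /forall_inP nm].
  move: nS; rewrite inE => /andP[nH nA].
  split => //.
  by apply: le_trans (nm _ v0S) Pv0.
have step' : forall u, u \notin A -> u != t -> ((u, nx u) \in E) && (nx u \notin A).
  move=> u uA ut; have [? ? _ _] := step u uA ut.
  by rewrite (subsetP HE).
have [p [P1 P2 P3 P4 _]] := @path_exists V E A nx t acyc step' _ s (leqnn _) sA.
set H' := [set e | e \in zip (s :: p) p].
have HH' : H' \subset H.
  apply/subsetP => [[u v]]; rewrite inE => /(zipP1 P1) [uin _ ut ->].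
  have uA : u \notin A by move/allP: P3; apply.
  by have [] := step u uA ut.
have mot : motivated c s t b Rw tb H'.
  exists [set u | u \notin s :: p], C, nx; split; last first.
    by rewrite inE mem_head.
  split.
    by rewrite inE negbK -P2 mem_last.
  split => // u ut /=.
  have [uin|uout] := boolP (u \in s :: p).
    have Hnx : nx u \in s :: p.
      by have [_ ? _ _] := zipP1 P1 _ _ (zipP2 P1 P2 u uin ut).
    have HS : [set v | ((u, v) \in H') && (v \notin [set u0 | u0 \notin s :: p])]
              = [set nx u].
      apply/setP => v; rewrite !inE negbK.
      apply/andP/eqP.
        by case=> /(zipP1 P1) [].
      by move=> ->; split; [exact: zipP2 P1 P2 u uin ut | move: Hnx; rewrite inE].
    rewrite HS.
    have uA : u \notin A by move/allP: P3; apply.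
    have [_ _ Ple Ce] := step u uA ut.
    rewrite inE uin /=; split.
      rewrite (negbTE (@set1n0 _ (nx u))) /=; apply/esym/negbTE; apply/forall_inPn.
      by exists (nx u); rewrite ?set11 // -leNgt.
    move=> _; split => //.
    have -> : [set v in [set nx u] | [forall w in [set nx u],
        b * c u v + C v <= b * c u w + C w]] = [set nx u].
      apply/setP => v; rewrite !inE andb_idr // => /eqP ->.
      by apply/forall_inP => w; rewrite inE => /eqP ->.
    have := Htb u [set nx u]; rewrite inE => /(_ (@set1n0 _ (nx u))) /eqP -> //.
  have -> : [set v | ((u, v) \in H') && (v \notin [set u0 | u0 \notin s :: p])]
            = set0.
    apply/setP => v; rewrite !inE; apply/negbTE; apply/negP => /andP[].
    by case/(zipP1 P1) => Hu; rewrite Hu in uout.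
  by rewrite inE uout eqxx.
have HeqH : H' = H.
  apply/eqP; rewrite eqEsubset HH' /=.
  apply/negP => /negP Hn; apply: (Hmin H' _ mot).
  by rewrite properE HH'.
exists p; split => //.
Qed.
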